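(* Let $(A,B,C,D)$ be reduced words in $a^{\pm1},b^{\pm1}$ defining a local $\mathrm{Aut}(F_3)$ braid representation. Let $x,\mathbf{C},\mathbf{D}$ be formal letters and write the word $C(B(x,\mathbf{C}),\mathbf{D})$, reduced over the alphabet $\{x^{\pm1},\mathbf{C}^{\pm1},\mathbf{D}^{\pm1}\}$, in the form $$W_0(\mathbf{C},\mathbf{D})\,x^{n_1}\,W_1(\mathbf{C},\mathbf{D})\,x^{n_2}\cdots x^{n_k}\,W_k(\mathbf{C},\mathbf{D}),$$ where $W_0,W_k$ are reduced (possibly empty) words in $\mathbf{C}^{\pm1},\mathbf{D}^{\pm1}$, $W_1,\dots,W_{k-1}$ are nonempty reduced words in $\mathbf{C}^{\pm1},\mathbf{D}^{\pm1}$, and $n_1,\dots,n_k$ are nonzero integers. Let $W_i$ also denote the word $W_i(C(y,z),D(y,z))$ in $y^{\pm1},z^{\pm1}$. Then, as words, $$\mathrm{red}\big(C(B(x,C(y,z)),D(y,z))\big)\equiv \mathrm{red}(W_0)\,x^{n_1}\,\mathrm{red}(W_1)\,x^{n_2}\cdots x^{n_k}\,\mathrm{red}(W_k).$$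
   Context: $F_2$ is free on $a,b$; $F_3$ is free on $x_1,x_2,x_3$ (here also written $x,y,z$). For a word $W$ in $a^{\pm1},b^{\pm1}$, $W(U,V)$ denotes the word obtained by substituting the word $U$ for $a$ and $V$ for $b$ (and $U^{-1},V^{-1}$ for $a^{-1},b^{-1}$). $\mathrm{red}(W)$ is the unique reduced word obtained from $W$ by cancelling subwords $ss^{-1}$, $s^{-1}s$; $\equiv$ denotes equality as words. A quadruple $(A,B,C,D)$ of reduced words defines a local $\mathrm{Aut}(F_3)$ braid representation if $\tau:a\mapsto A,b\mapsto B$ and $\kappa:a\mapsto C,b\mapsto D$ are automorphisms of $F_2$ and the automorphisms $s_1: x_1\mapsto A(x_1,x_2),\ x_2\mapsto B(x_1,x_2),\ x_3\mapsto x_3$ and $s_2: x_1\mapsto x_1,\ x_2\mapsto C(x_2,x_3),\ x_3\mapsto D(x_2,x_3)$ of $F_3$ satisfy $s_1s_2s_1=s_2s_1s_2$. *)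

(* Defs.v *)
From mathcomp Require Import ssreflect ssrfun ssrbool eqtype ssrnat seq.
From mathcomp Require Import ssralg ssrint.
Set Implicit Arguments. Unset Strict Implicit. Unset Printing Implicit Defensive.

(* A letter (i, true) is the generator number i, (i, false) its inverse. *)
Definition letter := (nat * bool)%type.
Definition word := seq letter.

Definition inv_letter (l : letter) : letter := (l.1, ~~ l.2).
Definition winv (w : word) : word := rev (map inv_letter w).
Definition gen (i : nat) : word := [:: (i, true)].

Definition valid (n : nat) (w : word) : bool := all (fun l => l.1 < n) w.

Fixpoint reduced (w : word) : bool :=
  match w with
  | l :: ((l' :: _) as t) => (l' != inv_letter l) && reduced t
  | _ => true
  end.

Fixpoint red (w : word) : word :=
  match w with
  | [::] => [::]
  | l :: t =>
      match red t with
      | l' :: r' => if l' == inv_letter l then r' else l :: l' :: r'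
      | [::] => [:: l]
      end
  end.

Definition subst (f : nat -> word) (w : word) : word :=
  flatten (map (fun l => if l.2 then f l.1 else winv (f l.1)) w).

(* W(U, V): substitute U for a (= generator 0) and V for b (= generator 1) *)
Definition app2 (W U V : word) : word :=
  subst (fun i => if i == 0 then U else if i == 1 then V else gen i) W.

(* The substitution sigma (generator i |-> sigma i) induces an automorphism of
   the free group F_n on generators 0..n-1 (elements = reduced words):
   it is well defined, injective and surjective. *)
Definition is_aut (n : nat) (sigma : nat -> word) : Prop :=
  [/\ (forall i, i < n -> valid n (sigma i)),
      (forall u v, valid n u -> valid n v ->
         red (subst sigma u) = red (subst sigma v) -> red u = red v) &
      (forall w, valid n w -> exists2 u, valid n u & red (subst sigma u) = red w)].

Definition pair_map (U V : word) : nat -> word :=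
  fun i => if i == 0 then U else if i == 1 then V else gen i.

(* s1 : x1 |-> A(x1,x2), x2 |-> B(x1,x2), x3 |-> x3 ; x_j = generator j-1 *)
Definition s1 (A B : word) : nat -> word :=
  fun i => if i == 0 then app2 A (gen 0) (gen 1)
           else if i == 1 then app2 B (gen 0) (gen 1) else gen i.
Definition s2 (C D : word) : nat -> word :=
  fun i => if i == 1 then app2 C (gen 1) (gen 2)
           else if i == 2 then app2 D (gen 1) (gen 2) else gen i.

(* The braid relation
   s1 s2 s1 = s2 s1 s2 is checked on the generators x1,x2,x3 (it is palindromic,
   so independent of the composition convention). *)
Definition local_braid_rep (A B C D : word) : Prop :=
  [&& valid 2 A && reduced A, valid 2 B && reduced B,
      valid 2 C && reduced C & valid 2 D && reduced D] /\
  is_aut 2 (pair_map A B) /\ is_aut 2 (pair_map C D) /\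
      (forall i, i < 3 ->
        red (subst (s1 A B) (subst (s2 C D) (s1 A B i)))
        = red (subst (s2 C D) (subst (s1 A B) (s2 C D i)))).

(* x^n for the letter x = generator 0 *)
Definition xpow (n : int) : word :=
  match n with
  | Posz m => nseq m (0, true)
  | Negz m => nseq m.+1 (0, false)
  end.

(* W0 x^{n1} W1 x^{n2} ... x^{nk} Wk, with blocks = [(n1,W1); ...; (nk,Wk)] *)
Definition xform (W0 : word) (blocks : seq (int * word)) : word :=
  W0 ++ flatten (map (fun p => xpow p.1 ++ p.2) blocks).

(* a reduced word in the letters C = generator 1 and D = generator 2 *)
Definition CDword (w : word) : bool :=
  all (fun l => (l.1 == 1) || (l.1 == 2)) w && reduced w.

(* Main.v *)
Require Import Defs.
From mathcomp Require Import ssreflect ssrfun ssrbool eqtype ssrnat seq.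
From mathcomp Require Import ssralg ssrint.

Definition push (l : letter) (r : word) : word :=
  match r with
  | l' :: r' => if l' == inv_letter l then r' else l :: r
  | [::] => [:: l]
  end.

Lemma redE l t : red (l :: t) = push l (red t).
Proof. by rewrite /=; case: (red t). Qed.

Lemma inv_letterK : involutive inv_letter.
Proof. by case=> i b; rewrite /inv_letter /= negbK. Qed.

Lemma reduced_tail l r : reduced (l :: r) -> reduced r.
Proof. by case: r => // ? ? /andP[]. Qed.

Lemma reduced_push l r : reduced r -> reduced (push l r).
Proof.
case: r => [|l' r] //= H.
case: ifP => E; first exact: (@reduced_tail l' r H).
by rewrite /= E H.
Qed.

Lemma reduced_red w : reduced (red w).
Proof. elim: w => // l t IH; rewrite redE; exact: reduced_push. Qed.

Lemma push_pushinv l r : reduced r -> push l (push (inv_letter l) r) = r.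
Proof.
case: r => [|l' r] /=; first by rewrite eqxx.
case: ifP => [/eqP|] E H /=.
  rewrite inv_letterK in E; subst l'.
  case: r H => [|l'' r] //= /andP[H _]. by rewrite (negbTE H).
by rewrite eqxx.
Qed.

Lemma red_cat u v : red (u ++ v) = foldr push (red v) u.
Proof. by elim: u => //= l u <-; rewrite -redE. Qed.

Lemma reduced_foldr r u : reduced r -> reduced (foldr push r u).
Proof. by move=> H; elim: u => //= l u IH; apply: reduced_push. Qed.

Lemma foldr_push_push r l s : reduced r ->
  foldr push r (push l s) = push l (foldr push r s).
Proof.
move=> Hr; case: s => [|l' s] //=.
case: ifP => // /eqP ->.
by rewrite push_pushinv // reduced_foldr.
Qed.

Lemma foldr_red r u : reduced r -> foldr push r (red u) = foldr push r u.
Proof.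
move=> Hr; elim: u => // l u IH.
by rewrite redE foldr_push_push //= IH.
Qed.

Lemma red_reduced w : reduced w -> red w = w.
Proof.
elim: w => // l t IH H; rewrite redE IH; last exact: reduced_tail H.
case: t H {IH} => //= l' t /andP[H _]; by rewrite (negbTE H).
Qed.

Lemma redK w : red (red w) = red w.
Proof. exact/red_reduced/reduced_red. Qed.

Lemma red_catl u v : red (u ++ v) = red (red u ++ v).
Proof. by rewrite !red_cat foldr_red // reduced_red. Qed.

Lemma red_catr u v : red (u ++ v) = red (u ++ red v).
Proof. by rewrite !red_cat redK. Qed.

Lemma winv_cons x X : winv (x :: X) = winv X ++ [:: inv_letter x].
Proof. by rewrite /winv /= rev_cons cats1. Qed.

Lemma winv_cancel X r : reduced r -> foldr push (foldr push r (winv X)) X = r.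
Proof.
elim: X r => // x X IH r Hr.
rewrite winv_cons foldr_cat /= IH; first exact: push_pushinv.
exact: reduced_push.
Qed.

Lemma red_winv X Y : red (X ++ winv X ++ Y) = red Y.
Proof. by rewrite catA red_cat foldr_cat winv_cancel // reduced_red. Qed.

Lemma winv_cat u v : winv (u ++ v) = winv v ++ winv u.
Proof. by rewrite /winv map_cat rev_cat. Qed.

Lemma winvK : involutive winv.
Proof.
by move=> u; rewrite /winv map_rev revK -map_comp map_id_in // => l _ /=; rewrite inv_letterK.
Qed.

Definition Fl (f : nat -> word) (l : letter) := if l.2 then f l.1 else winv (f l.1).

Lemma subst_cons f l w : subst f (l :: w) = Fl f l ++ subst f w.
Proof. by []. Qed.

Lemma subst_cat f u v : subst f (u ++ v) = subst f u ++ subst f v.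
Proof. by rewrite /subst map_cat flatten_cat. Qed.

Lemma Fl_inv f l : Fl f (inv_letter l) = winv (Fl f l).
Proof. by case: l => i [] //=; rewrite /Fl /= winvK. Qed.

Lemma subst_winv f u : subst f (winv u) = winv (subst f u).
Proof.
elim: u => // l u IH.
by rewrite winv_cons subst_cat IH subst_cons winv_cat /subst /= cats0 Fl_inv.
Qed.

Lemma red_subst f w : red (subst f w) = red (subst f (red w)).
Proof.
elim: w => // l t IH.
rewrite subst_cons red_catr IH -red_catr redE.
case: (red t) => [|l' s] //=.
case: ifP => // /eqP ->.
by rewrite subst_cons Fl_inv red_winv.
Qed.

Lemma subst_comp f g w :
  subst f (subst g w) = subst (fun i => subst f (g i)) w.
Proof.
elim: w => // l w IH.
rewrite !subst_cons subst_cat IH; congr (_ ++ _).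
by rewrite /Fl; case: l.2 => //; rewrite subst_winv.
Qed.

Lemma subst_ext n f g w : (forall i, i < n -> f i = g i) -> valid n w ->
  subst f w = subst g w.
Proof.
move=> H; elim: w => // l w IH /= /andP[Hl Hw].
by rewrite !subst_cons IH // /Fl H.
Qed.

Lemma subst_gen f i : subst f (gen i) = f i.
Proof. by rewrite /subst /= cats0. Qed.

Definition sh (l : letter) : letter := (l.1.+1, l.2).

Lemma sh_inj : injective sh.
Proof. by case=> i b [j c] [-> ->]. Qed.

Lemma sh_inv l : inv_letter (sh l) = sh (inv_letter l).
Proof. by []. Qed.

Lemma push_sh l r : push (sh l) (map sh r) = map sh (push l r).
Proof.
case: r => [|l' r] //=.
rewrite sh_inv (inj_eq sh_inj); by case: ifP.
Qed.

Lemma red_map_sh w : red (map sh w) = map sh (red w).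
Proof. by elim: w => // l w IH; rewrite map_cons !redE IH push_sh. Qed.

Lemma reduced_cons2 a b w : reduced [:: a, b & w] = (b != inv_letter a) && reduced (b :: w).
Proof. by []. Qed.

Lemma reduced_map_sh w : reduced (map sh w) = reduced w.
Proof.
elim: w => // l w IH; case: w IH => // l' w IH.
by rewrite map_cons map_cons !reduced_cons2 sh_inv (inj_eq sh_inj) -IH.
Qed.

Lemma winv_map_sh u : winv (map sh u) = map sh (winv u).
Proof. by rewrite /winv map_rev -!map_comp. Qed.

Lemma subst_map_sh g w :
  subst (fun i => map sh (g i)) w = map sh (subst g w).
Proof.
elim: w => // l w IH.
rewrite !subst_cons map_cat IH /Fl; case: l.2 => //; by rewrite winv_map_sh.
Qed.

Lemma subst_sh f w : subst f (map sh w) = subst (fun i => f i.+1) w.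
Proof. by elim: w => // l w IH; rewrite map_cons !subst_cons IH. Qed.

Lemma app2_sh W : valid 2 W -> app2 W (gen 1) (gen 2) = map sh W.
Proof.
elim: W => // [[i b]] W IH /= /andP[Hi HW].
rewrite /app2 subst_cons -/(app2 W (gen 1) (gen 2)) IH //.
by case: i Hi => [|[|]] // _; case: b.
Qed.

Lemma reduced_cat u v : reduced u -> reduced v ->
  (u != [::] -> v != [::] -> (head (0, true) v).1 != (last (0, true) u).1) ->
  reduced (u ++ v).
Proof.
elim: u => // a u IH Hu Hv Hb.
case: u IH Hu Hb => [|c u] IH Hu Hb.
  clear IH; case: v Hv Hb => // b v Hv Hb.
  rewrite cat1s reduced_cons2 Hv andbT; apply/eqP => E.
  by move: (Hb isT isT); rewrite /= E /= eqxx.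
rewrite cat_cons cat_cons reduced_cons2 -cat_cons.
move: Hu; rewrite reduced_cons2 => /andP[-> Hu] /=.
apply: IH => //.
Qed.

Lemma all_push (P : pred letter) l r : P l -> all P r -> all P (push l r).
Proof.
case: r => [|l' r] /=; first by move=> ->.
move=> Hl /andP[Hl' Hr]; case: ifP => _ //=; by rewrite Hl Hl' Hr.
Qed.

Lemma all_red (P : pred letter) w : all P w -> all P (red w).
Proof.
elim: w => // l w IH H; have /andP[Hl Hw] : P l && all P w by [].
rewrite redE; apply: all_push => //; exact: IH.
Qed.

Lemma all_head (P : pred letter) u d : u != [::] -> all P u -> P (head d u).
Proof. by case: u => //= a u _ /andP[]. Qed.

Lemma all_last (P : pred letter) u d : u != [::] -> all P u -> P (last d u).
Proof.
case: u => // a u _ H; rewrite /=; apply: (allP H); exact: mem_last.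
Qed.

Lemma xpow_eq n : exists b, xpow n = nseq (if n is Posz m then m else (if n is Negz m then m.+1 else 0)) (0, b).
Proof. by case: n => m; [exists true | exists false]. Qed.

Lemma reduced_nseq m (x : letter) : x != inv_letter x -> reduced (nseq m x).
Proof.
move=> H; elim: m => // m IH; case: m IH => // m IH.
by rewrite /= in IH *; rewrite H IH.
Qed.

Lemma reduced_xpow n : reduced (xpow n).
Proof.
have [b ->] := xpow_eq n; apply: reduced_nseq.
by rewrite /inv_letter /=; case: b.
Qed.

Lemma all_xpow n : all (fun l => l.1 == 0) (xpow n).
Proof. have [b ->] := xpow_eq n; by rewrite all_nseq /= orbT. Qed.

Lemma xpow_nil n : n != 0%R -> xpow n != [::].
Proof. by case: n => [[|m]|m]. Qed.

Lemma subst_xpow f n : f 0 = gen 0 -> subst f (xpow n) = xpow n.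
Proof.
move=> Hf; have [b ->] := xpow_eq n.
elim: (if n is Posz m then m else _) => // m IH.
rewrite /= subst_cons IH /Fl /= Hf; clear IH; by case: b.
Qed.

Lemma all_winv (P : pred letter) u : (forall l, P (inv_letter l) = P l) ->
  all P (winv u) = all P u.
Proof.
move=> H; rewrite /winv all_rev all_map; apply: eq_all => l /=; exact: H.
Qed.

Lemma all_subst (P : pred letter) f w : (forall l, P (inv_letter l) = P l) ->
  all (fun l => all P (f l.1)) w -> all P (subst f w).
Proof.
move=> HP; elim: w => // l w IH /= /andP[Hl Hw].
rewrite subst_cons all_cat IH // andbT /Fl; case: l.2 => //.
by rewrite all_winv.
Qed.

Definition nx (l : letter) : bool := l.1 != 0.

Lemma nx_inv l : nx (inv_letter l) = nx l. Proof. by []. Qed.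

Lemma all_nx_sh u : all nx (map sh u).
Proof. by elim: u. Qed.

Lemma s2_1 C D : s2 C D 1 = app2 C (gen 1) (gen 2). Proof. by []. Qed.
Lemma s2_2 C D : s2 C D 2 = app2 D (gen 1) (gen 2). Proof. by []. Qed.

Lemma all_nx_s2 C D W : valid 2 C -> valid 2 D -> CDword W ->
  all nx (subst (s2 C D) W).
Proof.
move=> vC vD /andP[HW _]; apply: all_subst => //.
apply/allP => l /(allP HW) /orP[/eqP->|/eqP->].
  by rewrite s2_1 app2_sh // all_nx_sh.
by rewrite s2_2 app2_sh // all_nx_sh.
Qed.

Lemma nonempty C D W : valid 2 C -> valid 2 D -> is_aut 2 (pair_map C D) ->
  CDword W -> W != [::] -> red (subst (s2 C D) W) != [::].
Proof.
move=> vC vD [_ Hinj _] HCD HWne.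
have /andP[HW HWr] := HCD.
set W' := map (fun l : letter => (l.1.-1, l.2)) W.
have HWW : map sh W' = W.
  rewrite -map_comp map_id_in // => [[i b]] /(allP HW) /=.
  by case: i.
have vW' : valid 2 W'.
  rewrite /valid all_map; apply/allP => l /(allP HW) /= /orP[/eqP->|/eqP->] //.
have E : subst (s2 C D) W = map sh (subst (pair_map C D) W').
  rewrite -HWW subst_sh -subst_map_sh; apply: (@subst_ext 2) vW'.
  case=> [|[|]] //= _; [by rewrite s2_1 app2_sh | by rewrite s2_2 app2_sh].
apply/negP; rewrite E red_map_sh => H0.
have H1 : red (subst (pair_map C D) W') = red (subst (pair_map C D) [::]).
  by case: (red _) H0.
have := Hinj W' [::] vW' isT H1.
rewrite red_reduced; last by rewrite -reduced_map_sh HWW.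
by move=> E'; move: HWne; rewrite -HWW E'.
Qed.

Lemma flat_cons (a : word) (l : seq word) : flatten (a :: l) = a ++ flatten l.
Proof. by []. Qed.

Lemma tail_red (g : word -> word) (bs : seq (int * word)) :
  red (flatten (map (fun p => xpow p.1 ++ g p.2) bs))
  = red (flatten (map (fun p => xpow p.1 ++ red (g p.2)) bs)).
Proof.
elim: bs => // p bs IH.
rewrite !map_cons !flat_cons [LHS]red_catr IH -red_catr -!catA.
rewrite [LHS]red_catr [RHS]red_catr; congr (red (_ ++ _)).
by rewrite red_catl [RHS]red_catl redK.
Qed.

Lemma tail_reduced (g : word -> word) (bs : seq (int * word)) :
  (forall W, CDword W -> reduced (g W) && all nx (g W)) ->
  (forall W, CDword W -> W != [::] -> g W != [::]) ->
  all (fun p => (p.1 != 0%R) && CDword p.2) bs ->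
  all (fun p => p.2 != [::]) (take (size bs).-1 bs) ->
  reduced (flatten (map (fun p => xpow p.1 ++ g p.2) bs)) &&
  ((head (0, true) (flatten (map (fun p => xpow p.1 ++ g p.2) bs))).1 == 0).
Proof.
move=> Hg Hne; elim: bs => [|p bs IH] // /andP[/andP[Hn HW] Hall] Htake.
have [Ht Hp] : all (fun p => p.2 != [::]) (take (size bs).-1 bs) /\
               (bs != [::] -> p.2 != [::]).
  by case: bs Htake {IH Hall} => [|q bs] //= /andP[-> ->].
have {IH} /andP[HT HhT] := IH Hall Ht.
rewrite map_cons flat_cons -catA.
set T := flatten _ in HT HhT *.
have /andP[Hgr Hga] := Hg _ HW.
have HgT : reduced (g p.2 ++ T).
  apply: reduced_cat => // Hgne HTne.
  by rewrite (eqP HhT) eq_sym; exact: (@all_last nx _ (0, true) Hgne Hga).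
apply/andP; split; last first.
  have := all_xpow p.1; case: (xpow p.1) (@xpow_nil _ Hn) => // a l _ /= /andP[].
  done.
apply: reduced_cat => //; first exact: reduced_xpow.
move=> _ Hne2.
rewrite (eqP (@all_last _ _ (0, true) (@xpow_nil _ Hn) (all_xpow _))).
case Eg: (g p.2) => [|a l].
  have Hbs : bs = [::].
    clear -Hp Hne HW Eg; case: bs Hp => // q bs /(_ isT) /(Hne _ HW).
    by rewrite Eg.
  by move: Hne2; rewrite Eg /T Hbs.
by move: Hga; rewrite Eg /= => /andP[].
Qed.

Theorem lemma3p1 (A B C D : word) (W0 : word) (blocks : seq (int * word)) :
  local_braid_rep A B C D ->
  CDword W0 ->
  all (fun p => (p.1 != 0%R) && CDword p.2) blocks ->
  all (fun p => p.2 != [::]) (take (size blocks).-1 blocks) ->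
  red (app2 C (app2 B (gen 0) (gen 1)) (gen 2)) = xform W0 blocks ->
  red (app2 C (app2 B (gen 0) (app2 C (gen 1) (gen 2))) (app2 D (gen 1) (gen 2)))
  = xform (red (subst (s2 C D) W0))
          (map (fun p => (p.1, red (subst (s2 C D) p.2))) blocks).
Proof.
move=> [Hv [_ [HautCD _]]] HW0 Hblocks Hne Hred.
case/and4P: Hv => /andP[vA _] /andP[vB _] /andP[vC _] /andP[vD _].
have E1 : app2 C (app2 B (gen 0) (app2 C (gen 1) (gen 2))) (app2 D (gen 1) (gen 2))
  = subst (s2 C D) (app2 C (app2 B (gen 0) (gen 1)) (gen 2)).
  rewrite /app2 subst_comp; apply: (@subst_ext 2) vC.
  case=> [|[|]] //= _; last by rewrite subst_gen.
  rewrite subst_comp; apply: (@subst_ext 2) vB.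
  by case=> [|[|]] //= _; rewrite subst_gen.
rewrite E1 red_subst Hred.
have Es : subst (s2 C D) (xform W0 blocks) = subst (s2 C D) W0 ++
   flatten (map (fun p => xpow p.1 ++ subst (s2 C D) p.2) blocks).
  rewrite /xform subst_cat; congr (_ ++ _).
  elim: blocks {Hblocks Hne Hred} => // p bs IH.
  by rewrite !map_cons !flat_cons !subst_cat subst_xpow // IH.
have Hg : forall W, CDword W -> reduced (red (subst (s2 C D) W)) &&
                               all nx (red (subst (s2 C D) W)).
  move=> W HW; rewrite reduced_red /=; apply: all_red; exact: all_nx_s2.
have Hg' : forall W, CDword W -> W != [::] -> red (subst (s2 C D) W) != [::].
  move=> W HW; exact: nonempty.
have /andP[HT HhT] := @tail_reduced _ _ Hg Hg' Hblocks Hne.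
rewrite Es red_catl red_catr tail_red -red_catr red_reduced.
  by rewrite /xform -map_comp.
have /andP[HW0r HW0a] := Hg _ HW0.
apply: reduced_cat => // H1 H2.
by rewrite (eqP HhT) eq_sym; exact: (@all_last nx _ (0, true) H1 HW0a).
Qed.
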